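(* If $G$ is a gate and $v\in V(G)$, then $v$ belongs to exactly two cliques of $G$, and if $C_1$ and $C_2$ are these two cliques then $C_1\cap C_2=\{v\}$.
   Context: All graphs are finite and simple. A clique is a maximal complete set of vertices. Gates are defined recursively: (i) every chordless cycle $C_n$ with $n\geq 4$ is a gate; (ii) if $H$ is a gate, $C$ and $C'$ are disjoint cliques of $H$, and $P=(v_1,\dots,v_l)$ with $l\geq 2$ is a chordless path vertex-disjoint from $H$, then the union of $H$ and $P$ together with all edges between $v_1$ and the vertices of $C$ and all edges between $v_l$ and the vertices of $C'$ is a gate; (iii) there are no other gates. *)

(* Defs.v *)
(* Graphs: a finite simple graph is given by a vertex set
   V : {set T} inside an ambient finType T and an adjacency relation E : rel T
   (symmetric, irreflexive, supported on V).  Gates are an inductive predicate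
   on such (V, E); fresh path vertices are taken from T :\: V. *)
From mathcomp Require Import all_boot.
Set Implicit Arguments. Unset Strict Implicit. Unset Printing Implicit Defensive.

Section Gates.
Variable T : finType.

Definition complete (E : rel T) (S : {set T}) : Prop :=
  forall x y, x \in S -> y \in S -> x != y -> E x y.

Definition clique (V : {set T}) (E : rel T) (C : {set T}) : Prop :=
  [/\ C \subset V, complete E C &
      forall D : {set T}, C \subset D -> D \subset V -> complete E D -> D = C].

Definition cycle_rel (c : seq T) : rel T := fun x y =>
  [&& x \in c, y \in c &
      (index y c == (index x c).+1 %% size c) ||
      (index x c == (index y c).+1 %% size c)].

Definition path_rel (p : seq T) : rel T := fun x y =>
  [&& x \in p, y \in p &
      (index y p == (index x p).+1) || (index x p == (index y p).+1)].

Definition attach_rel (v : T) (S : {set T}) : rel T := fun x y =>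
  ((x == v) && (y \in S)) || ((y == v) && (x \in S)).

Definition gate_ext (E : rel T) (a : T) (s : seq T) (C C' : {set T}) : rel T :=
  fun x y => [|| E x y, path_rel (a :: s) x y,
                 attach_rel a C x y | attach_rel (last a s) C' x y].

Inductive gate : {set T} -> rel T -> Prop :=
| gate_cycle (c : seq T) :
    uniq c -> 4 <= size c -> gate [set x in c] (cycle_rel c)
| gate_add (V : {set T}) (E : rel T) (C C' : {set T}) (a : T) (s : seq T) :
    gate V E -> clique V E C -> clique V E C' -> [disjoint C & C'] ->
    uniq (a :: s) -> 1 <= size s -> [disjoint [set x in a :: s] & V] ->
    gate (V :|: [set x in a :: s]) (gate_ext E a s C C').

End Gates.

(* Main.v *)
Require Import Defs.
From mathcomp Require Import all_boot zify.
Set Implicit Arguments. Unset Strict Implicit. Unset Printing Implicit Defensive.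

Section Generic.
Variable T : finType.
Implicit Types (V A K D : {set T}) (E : rel T).

Definition good V E v := exists C1 C2 : {set T},
    [/\ C1 != C2, clique V E C1, clique V E C2 & v \in C1 /\ v \in C2] /\
    (forall C, clique V E C -> v \in C -> C = C1 \/ C = C2) /\
    C1 :&: C2 = [set v].

Definition completeb E (S : {set T}) := [forall x in S, forall y in S, (x != y) ==> E x y].
Lemma completeP E (S : {set T}) : reflect (complete E S) (completeb E S).
Proof.
apply: (iffP forall_inP) => H.
- move=> x y xS yS nxy. by have /forall_inP/(_ y yS)/implyP := H x xS; apply.
- move=> x xS; apply/forall_inP => y yS; apply/implyP; exact: H.
Qed.

Lemma extend_clique V E K : K \subset V -> complete E K ->
  exists D, clique V E D /\ K \subset D.
Proof.
move=> KV cK.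
pose P := fun D : {set T} => [&& K \subset D, D \subset V & completeb E D].
have PK : P K by rewrite /P subxx KV; apply/completeP.
case: (arg_maxnP (fun D => #|D|) PK) => D /and3P[KD DV /completeP cD] Dmax.
exists D; split => //; split => // D' DD' D'V cD'.
apply/eqP; rewrite eq_sym eqEcard DD' /=.
apply: Dmax; rewrite /P D'V (subset_trans KD DD'); exact/completeP.
Qed.

Lemma deg_lemma V E v (A : {set T}) x :
  symmetric E ->
  v \in V -> x \in V -> A \subset V -> A != set0 -> x \notin A -> x != v -> v \notin A ->
  complete E A -> (forall c, c \in A -> ~~ E x c) ->
  (forall y, y != v -> E v y = (y \in A) || (y == x)) ->
  good V E v.
Proof.
move=> Esym vV xV AV An0 xA xv vA cA xAn Nv.
have [c cA0] : exists c, c \in A by apply/set0Pn.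
have cC1 : complete E (v |: A).
  move=> y z; rewrite !inE => /orP[/eqP->|yA] /orP[/eqP->|zA]; rewrite ?eqxx //.
  - by move=> vz; rewrite Nv 1?eq_sym // zA.
  - by move=> yv; rewrite Esym Nv // yA.
  - exact: cA.
have cC2 : complete E [set v; x].
  move=> y z; rewrite !inE => /orP[]/eqP-> /orP[]/eqP->; rewrite ?eqxx //.
  - by move=> _; rewrite Nv // eqxx orbT.
  - by move=> _; rewrite Esym Nv // eqxx orbT.
have C1V : v |: A \subset V by rewrite subUset sub1set vV AV.
have C2V : [set v; x] \subset V by rewrite subUset !sub1set vV xV.
have key : forall D, complete E D -> v \in D -> D \subset v |: A \/ D \subset [set v; x].
  move=> D cD vD; case: (boolP (x \in D)) => xD.
  - right; apply/subsetP => y yD; rewrite !inE.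
    case: (eqVneq y v) => // yv; case: (eqVneq y x) => //= yx.
    have : E v y by apply: cD => //; rewrite eq_sym.
    rewrite Nv // (negbTE yx) orbF => yA.
    by move: (xAn _ yA); rewrite cD // eq_sym.
  - left; apply/subsetP => y yD; rewrite !inE.
    case: (eqVneq y v) => //= yv.
    have : E v y by apply: cD => //; rewrite eq_sym.
    rewrite Nv //; case/orP => // /eqP yx; by rewrite -yx yD in xD.
have clC1 : clique V E (v |: A).
  split => // D sD DV cD.
  have vD : v \in D by apply: (subsetP sD); rewrite setU11.
  case: (key D cD vD) => sD'; first by apply/eqP; rewrite eqEsubset sD' sD.
  have : c \in [set v; x] by apply: (subsetP sD'); apply: (subsetP sD); rewrite inE cA0 orbT.
  rewrite !inE => /orP[]/eqP ce; [by rewrite -ce cA0 in vA | by rewrite -ce cA0 in xA].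
have clC2 : clique V E [set v; x].
  split => // D sD DV cD.
  have vD : v \in D by apply: (subsetP sD); rewrite !inE eqxx.
  case: (key D cD vD) => sD'; last by apply/eqP; rewrite eqEsubset sD' sD.
  have : x \in v |: A by apply: (subsetP sD'); apply: (subsetP sD); rewrite !inE eqxx orbT.
  by rewrite !inE (negbTE xv) (negbTE xA).
exists (v |: A), [set v; x]; split; [split|split] => //.
- apply/negP => /eqP e; have : x \in v |: A by rewrite e !inE eqxx orbT.
  by rewrite !inE (negbTE xv) (negbTE xA).
- by rewrite setU11 !inE eqxx.
- move=> K [KV cK Kmax] vK; case: (key K cK vK) => sK.
  + by left; symmetry; apply: Kmax => //; case: clC1.
  + by right; symmetry; apply: Kmax => //; case: clC2.
- apply/setP => y; rewrite !inE; case: (eqVneq y v) => //= yv.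
  by case: (eqVneq y x) => [->|]; rewrite ?(negbTE xA) ?andbF.
Qed.
End Generic.

Lemma modS k n : k < n -> k.+1 %% n = if k.+1 < n then k.+1 else 0.
Proof.
move=> kn; case: ltnP => h; first by rewrite modn_small.
have -> : k.+1 = n by apply/eqP; rewrite eqn_leq kn h.
by rewrite modnn.
Qed.

Lemma cycle_good (T : finType) (c : seq T) : uniq c -> 4 <= size c ->
  forall v, v \in [set x in c] -> good [set x in c] (cycle_rel c) v.
Proof.
move=> uc n4 v; rewrite inE => vc.
set n := size c in n4 *.
set i := index v c.
have i_n : i < n by rewrite index_mem.
have vi : nth v c i = v by rewrite nth_index.
pose ni := if i.+1 < n then i.+1 else 0.
pose pi := if i == 0 then n.-1 else i.-1.
have ni_n : ni < n by rewrite /ni; case: ifP => //; lia.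
have pi_n : pi < n by rewrite /pi; case: ifP => //; lia.
have nthE : forall j k, j < n -> k < n -> (nth v c j == nth v c k) = (j == k).
  by move=> j k jn kn; rewrite nth_uniq.
have idxE : forall k, k < n -> index (nth v c k) c = k.
  by move=> k kn; rewrite index_uniq.
have memE : forall k, k < n -> nth v c k \in c by move=> k kn; rewrite mem_nth.
have relE : forall j k, j < n -> k < n ->
   cycle_rel c (nth v c j) (nth v c k) =
   (k == if j.+1 < n then j.+1 else 0) || (j == if k.+1 < n then k.+1 else 0).
  move=> j k jn kn; rewrite /cycle_rel !memE // !idxE // -/n !modS //.
apply: (@deg_lemma _ _ _ v [set nth v c pi] (nth v c ni)).
- by move=> x y; rewrite /cycle_rel andbCA orbC.
- by rewrite inE.
- by rewrite inE memE.
- by apply/subsetP => y; rewrite !inE => /eqP->; rewrite memE.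
- by apply/set0Pn; exists (nth v c pi); rewrite inE.
- rewrite inE nthE // /ni /pi; case: ifP; case: ifP; lia.
- rewrite -{2}vi nthE // /ni; case: ifP; lia.
- rewrite inE -{1}vi nthE // /pi; case: ifP; lia.
- by move=> x y; rewrite !inE => /eqP-> /eqP->; rewrite eqxx.
- move=> y; rewrite inE => /eqP->; rewrite relE // /ni /pi.
  case: ifP; case: ifP; try case: ifP; try case: ifP; lia.
- move=> y yv; rewrite inE.
  case: (boolP (y \in c)) => yc; last first.
    have -> : (y == nth v c pi) = false by apply: contraNF yc => /eqP->; rewrite memE.
    have -> : (y == nth v c ni) = false by apply: contraNF yc => /eqP->; rewrite memE.
    by rewrite /cycle_rel (negbTE yc) andbF.
  have yj : nth v c (index y c) = y by rewrite nth_index.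
  have jn : index y c < n by rewrite index_mem.
  move: (index y c) yj jn => j yj jn; subst y.
  have ji : j != i by move: yv; apply: contra => /eqP->; rewrite vi.
  have -> : cycle_rel c v (nth v c j) = cycle_rel c (nth v c i) (nth v c j) by rewrite vi.
  rewrite !nthE // relE // /ni /pi.
  move: ji; case: ifP; case: ifP; try case: ifP; try case: ifP; lia.
Qed.

Lemma clique_neq0 (T : finType) (V C : {set T}) E : V != set0 -> clique V E C -> C != set0.
Proof.
case/set0Pn => x xV [CV cC Cmax]; apply/negP => /eqP C0.
have : [set x] = C by apply: Cmax; rewrite ?C0 ?sub0set ?sub1set // => y z; rewrite !inE => /eqP-> /eqP->; rewrite eqxx.
by move/setP/(_ x); rewrite C0 !inE eqxx.
Qed.

Section Ext.
Variable T : finType.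
Variables (V : {set T}) (E : rel T) (C C2 : {set T}) (a : T) (s : seq T).
Hypothesis Esym : symmetric E.
Hypothesis Esupp : forall x y, E x y -> x \in V.
Hypothesis Vne : V != set0.
Hypothesis IH : forall v, v \in V -> good V E v.
Hypothesis clC : clique V E C.
Hypothesis clC2 : clique V E C2.
Hypothesis disC : [disjoint C & C2].
Hypothesis up : uniq (a :: s).
Hypothesis s1 : 1 <= size s.
Hypothesis disP : [disjoint [set x in a :: s] & V].

Local Notation p := (a :: s).
Local Notation b := (last a s).
Local Notation E' := (gate_ext E a s C C2).
Local Notation V' := (V :|: [set x in a :: s]).

Lemma pV x : x \in p -> x \notin V.
Proof. by move=> xp; rewrite (disjointFr disP) // inE. Qed.

Lemma CV x : x \in C -> x \in V.
Proof. by move=> xC; case: clC => /subsetP H _ _; apply: H. Qed.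
Lemma C2V x : x \in C2 -> x \in V.
Proof. by move=> xC; case: clC2 => /subsetP H _ _; apply: H. Qed.
Lemma notCC2 x : x \in C -> x \in C2 -> False.
Proof. by move=> h1; rewrite (disjointFr disC h1). Qed.

Lemma bp : b \in p.
Proof. by rewrite mem_last. Qed.

Lemma bE : b = nth a p (size s).
Proof. by rewrite (nth_last a p). Qed.

Lemma ab : a != b.
Proof.
rewrite bE -{1}[a]/(nth a p 0) nth_uniq //=; lia.
Qed.

Lemma E'V x y : x \in V -> y \in V -> E' x y = E x y.
Proof.
move=> xV yV; rewrite /gate_ext /path_rel /attach_rel.
have xp : x \notin p by apply: contraTN xV => /pV.
have yp : y \notin p by apply: contraTN yV => /pV.
have xa : (x == a) = false by apply: contraNF xp => /eqP->; rewrite mem_head.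
have ya : (y == a) = false by apply: contraNF yp => /eqP->; rewrite mem_head.
have xb : (x == b) = false by apply: contraNF xp => /eqP->; rewrite bp.
have yb : (y == b) = false by apply: contraNF yp => /eqP->; rewrite bp.
by rewrite (negbTE xp) xa ya xb yb /= !orbF.
Qed.

Lemma E'p x y : x \in p ->
  E' x y = [|| path_rel p x y, (x == a) && (y \in C) | (x == b) && (y \in C2)].
Proof.
move=> xp; rewrite /gate_ext /attach_rel.
have -> : E x y = false by apply/negP => /Esupp; apply/negP; exact: pV xp.
have -> : (x \in C) = false by apply/negP => /CV; apply/negP; exact: pV xp.
have -> : (x \in C2) = false by apply/negP => /C2V; apply/negP; exact: pV xp.
by rewrite /= !andbF !orbF.
Qed.

Lemma E'sym : symmetric E'.
Proof.
move=> x y; rewrite /gate_ext Esym; congr [|| _, _, _ | _].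
- by rewrite /path_rel andbCA orbC.
- by rewrite /attach_rel orbC.
- by rewrite /attach_rel orbC.
Qed.

Lemma Vp x : x \in V -> x \notin p.
Proof. by move=> xV; apply: contraTN xV => /pV. Qed.

Lemma E'pV y x : y \in p -> x \in V ->
  E' y x = ((y == a) && (x \in C)) || ((y == b) && (x \in C2)).
Proof. by move=> yp xV; rewrite E'p // /path_rel (negbTE (Vp xV)) andbF. Qed.

Lemma Cne : C != set0.
Proof. exact: clique_neq0 Vne clC. Qed.
Lemma C2ne : C2 != set0.
Proof. exact: clique_neq0 Vne clC2. Qed.
Lemma CC2 : C != C2.
Proof.
apply/negP => /eqP e; have [x xC] := set0Pn _ Cne.
by apply: (@notCC2 x) => //; rewrite -e.
Qed.

Definition f (D : {set T}) : {set T} :=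
  D :|: [set x | ((x == a) && (D == C)) || ((x == b) && (D == C2))].

Lemma inf D y : (y \in f D) = [|| y \in D, (y == a) && (D == C) | (y == b) && (D == C2)].
Proof. by rewrite !inE. Qed.

Lemma fclique D : clique V E D -> clique V' E' (f D).
Proof.
move=> clD; have [DV cD Dmax] := clD.
have [CsV cC _] := clC; have [C2sV cC2 _] := clC2.
have [d dD] : exists d, d \in D by apply/set0Pn; exact: clique_neq0 Vne clD.
have DVx : forall z, z \in D -> z \in V by move=> z; apply: (subsetP DV).
split.
- apply/subsetP => y; rewrite inf in_setU in_set => /or3P[yD|/andP[/eqP-> _]|/andP[/eqP-> _]].
  + by rewrite DVx.
  + by rewrite mem_head orbT.
  + by rewrite bp orbT.
- move=> x y; rewrite !inf.
  case/or3P=> [xD|/andP[/eqP-> /eqP DC]|/andP[/eqP-> /eqP DC2]];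
  case/or3P=> [yD|/andP[/eqP-> /eqP DC']|/andP[/eqP-> /eqP DC2']] xy.
  + by rewrite E'V ?DVx //; apply: cD.
  + by rewrite E'sym E'pV ?mem_head ?DVx // eqxx -DC' xD.
  + by rewrite E'sym E'pV ?bp ?DVx // eqxx -DC2' xD orbT.
  + by rewrite E'pV ?mem_head ?DVx // eqxx -DC yD.
  + by rewrite eqxx in xy.
  + by move: CC2; rewrite -DC DC2' eqxx.
  + by rewrite E'pV ?bp ?DVx // eqxx -DC2 yD orbT.
  + by move: CC2; rewrite -DC' DC2 eqxx.
  + by rewrite eqxx in xy.
- move=> D' sD D'V cD'; apply/eqP; rewrite eqEsubset sD andbT.
  apply/subsetP => y yD'.
  case: (boolP (y \in V)) => yV.
  + have e : D' :&: V = D.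
      apply: Dmax.
      * by apply/subsetP => z zD; rewrite inE DVx // (subsetP sD) // inf zD.
      * exact: subsetIr.
      * move=> z w; rewrite !inE => /andP[zD' zV] /andP[wD' wV] zw.
        by rewrite -E'V //; apply: cD'.
    by move/setP: e => /(_ y); rewrite in_setI yD' yV /= => yD; rewrite inf -yD.
  + have yp : y \in p by move: (subsetP D'V y yD'); rewrite !inE (negbTE yV).
    have hd : forall z, z \in D -> (y == a) && (z \in C) || (y == b) && (z \in C2).
      move=> z zD; rewrite -E'pV ?DVx //; apply: cD' => //.
        by apply: (subsetP sD); rewrite inf zD.
      by apply: contraNneq yV => ->; rewrite DVx.
    move: (hd d dD) => /orP[/andP[/eqP ya _]|/andP[/eqP yb _]].
    * have DC : C = D.
        apply: Dmax; last by [].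
          apply/subsetP => z zD; move: (hd z zD); rewrite ya eqxx (negbTE ab) /= orbF; exact: id.
        by [].
      by rewrite inf ya eqxx DC eqxx orbT.
    * have DC : C2 = D.
        apply: Dmax; last by [].
          apply/subsetP => z zD; move: (hd z zD); rewrite yb eq_sym (negbTE ab) eqxx /=; exact: id.
        by [].
      by rewrite inf yb DC !eqxx !orbT.
Qed.

Lemma classify K v : clique V' E' K -> v \in K -> v \in V ->
  exists D, [/\ clique V E D, v \in D & K = f D].
Proof.
move=> [KV' cK Kmax] vK vV.
have Kf : forall D, clique V E D -> K \subset f D -> K = f D.
  move=> D clD sK; have [fV' cf _] := fclique clD; symmetry; exact: Kmax.
have hp : forall y, y \in K -> y \in p -> forall x, x \in K -> x \in V ->
    (y == a) && (x \in C) || (y == b) && (x \in C2).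
  move=> y yK yp x xK xV; rewrite -E'pV //; apply: cK => //.
  by apply: contraTneq yp => ->; exact: Vp xV.
have Kp : forall y, y \in K -> y \notin V -> y \in p.
  by move=> y yK yV; move: (subsetP KV' y yK); rewrite in_setU in_set (negbTE yV).
case: (boolP (a \in K)) => aK.
  have vC : v \in C by move: (hp a aK (mem_head a s) v vK vV); rewrite eqxx (negbTE ab) /= orbF.
  exists C; split => //; apply: Kf => //; apply/subsetP => y yK; rewrite inf.
  case: (boolP (y \in V)) => yV.
    by move: (hp a aK (mem_head a s) y yK yV); rewrite eqxx (negbTE ab) /= orbF => ->.
  move: (hp y yK (Kp y yK yV) v vK vV) => /orP[/andP[/eqP-> _]|/andP[_ vC2]].
    by rewrite !eqxx orbT.
  by case: (notCC2 vC vC2).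
case: (boolP (b \in K)) => bK.
  have vC2 : v \in C2 by move: (hp b bK bp v vK vV); rewrite eqxx eq_sym (negbTE ab) /=.
  exists C2; split => //; apply: Kf => //; apply/subsetP => y yK; rewrite inf.
  case: (boolP (y \in V)) => yV.
    by move: (hp b bK bp y yK yV); rewrite eqxx eq_sym (negbTE ab) /= => ->.
  move: (hp y yK (Kp y yK yV) v vK vV) => /orP[/andP[_ vC]|/andP[/eqP-> _]].
    by case: (notCC2 vC vC2).
  by rewrite !eqxx !orbT.
have KV : K \subset V.
  apply/subsetP => y yK; apply/negPn/negP => yV.
  move: (hp y yK (Kp y yK yV) v vK vV) => /orP[/andP[/eqP ya _]|/andP[/eqP yb _]].
    by rewrite -ya yK in aK.
  by rewrite -yb yK in bK.
have cKE : complete E K.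
  move=> x y xK yK xy; rewrite -E'V ?(subsetP KV) //; exact: cK.
have [D [clD KD]] := extend_clique KV cKE.
exists D; split => //; first exact: (subsetP KD).
apply: Kf => //; apply: (subset_trans KD); exact: subsetUl.
Qed.

Lemma old_good v : v \in V -> good V' E' v.
Proof.
move=> vV; have [D1 [D2 [[D12 cl1 cl2 [v1 v2]] [all12 I12]]]] := IH vV.
have DVc : forall D y, clique V E D -> y \notin V -> y \notin D.
  move=> D y [DV _ _] yV; apply: contra yV; exact: (subsetP DV).
have fin : forall D y, y \in V -> (y \in f D) = (y \in D).
  move=> D y yV; rewrite inf.
  have -> : (y == a) = false by apply: contraTF yV => /eqP->; apply: pV; rewrite mem_head.
  have -> : (y == b) = false by apply: contraTF yV => /eqP->; apply: pV; rewrite bp.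
  by rewrite /= orbF.
have fVn : forall D y, clique V E D -> y \notin V ->
    (y \in f D) = (y == a) && (D == C) || (y == b) && (D == C2).
  by move=> D y clD yV; rewrite inf (negbTE (DVc D y clD yV)).
exists (f D1), (f D2); split; [split|split].
- apply: contraNneq D12 => e; apply/eqP/setP => y.
  case: (boolP (y \in V)) => yV; first by rewrite -(fin D1) // -(fin D2) // e.
  by rewrite (negbTE (DVc _ _ cl1 yV)) (negbTE (DVc _ _ cl2 yV)).
- exact: fclique.
- exact: fclique.
- by rewrite !fin.
- move=> K clK vK; have [D [clD vD ->]] := classify clK vK vV.
  by case: (all12 D clD vD) => ->; [left|right].
- apply/setP => y; rewrite in_setI in_set1.
  case: (boolP (y \in V)) => yV.
    by rewrite !fin // -in_setI I12 in_set1.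
  rewrite !fVn //.
  have -> : (y == v) = false by apply: contraNF yV => /eqP->.
  case: (eqVneq y a) => [ya|ya] /=.
    rewrite ya (negbTE ab) /= !orbF; apply/negP => /andP[/eqP e1 /eqP e2].
    by rewrite e1 e2 eqxx in D12.
  case: (eqVneq y b) => [yb|yb] //=.
  apply/negP => /andP[/eqP e1 /eqP e2].
  by rewrite e1 e2 eqxx in D12.
Qed.

Lemma path_good v : v \in p -> good V' E' v.
Proof.
move=> vp.
have [CsV cC _] := clC; have [C2sV cC2 _] := clC2.
set n := size p.
have n2 : 1 < n by rewrite /n /=; lia.
have nE : n = (size s).+1 by [].
have nthE : forall j k, j < n -> k < n -> (nth a p j == nth a p k) = (j == k).
  by move=> j k jn kn; rewrite nth_uniq.
have memp : forall k, k < n -> nth a p k \in p by move=> k kn; rewrite mem_nth.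
have nV : forall k, k < n -> (nth a p k \in V) = false.
  by move=> k kn; apply/negbTE/pV/memp.
have nC : forall k, k < n -> (nth a p k \in C) = false.
  by move=> k kn; apply/negP => /CV; rewrite nV.
have nC2 : forall k, k < n -> (nth a p k \in C2) = false.
  by move=> k kn; apply/negP => /C2V; rewrite nV.
have inV' : forall k, k < n -> nth a p k \in V'.
  by move=> k kn; rewrite in_setU in_set memp ?orbT.
have E'nn : forall j k, j < n -> k < n ->
    E' (nth a p j) (nth a p k) = (k == j.+1) || (j == k.+1).
  move=> j k jn kn.
  by rewrite E'p ?memp // /path_rel !memp // !index_uniq // nC // nC2 // !andbF !orbF.
have eqa : forall j, j < n -> (nth a p j == a) = (j == 0).
  by move=> j jn; rewrite -[X in _ == X]/(nth a p 0) nthE.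
have eqb : forall j, j < n -> (nth a p j == b) = (j == size s).
  by move=> j jn; rewrite bE nthE.
have E'nV : forall j y, j < n -> y \in V ->
    E' (nth a p j) y = (j == 0) && (y \in C) || (j == size s) && (y \in C2).
  by move=> j y jn yV; rewrite E'pV ?memp // eqa // eqb.
have E'n0 : forall j y, j < n -> y \notin V -> y \notin p -> E' (nth a p j) y = false.
  move=> j y jn yV yp; rewrite E'p ?memp // /path_rel (negbTE yp) andbF /=.
  have -> : (y \in C) = false by apply: contraNF yV => /CV.
  have -> : (y \in C2) = false by apply: contraNF yV => /C2V.
  by rewrite !andbF.
have Vneq : forall y k, y \in V -> k < n -> (y == nth a p k) = false.
  by move=> y k yV kn; apply: contraTF yV => /eqP->; rewrite nV.
have Pneq : forall y k, y \notin p -> k < n -> (y == nth a p k) = false.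
  by move=> y k yp kn; apply: contraNF yp => /eqP->; rewrite memp.
have yc : forall y, y \in V \/ (exists2 j, j < n & y = nth a p j) \/ (y \notin V /\ y \notin p).
  move=> y; case: (boolP (y \in V)) => yV; first by left.
  case: (boolP (y \in p)) => yp; last by right; right.
  by right; left; exists (index y p); rewrite ?index_mem ?nth_index.
have CnV : forall y, y \notin V -> (y \in C) = false.
  by move=> y yV; apply: contraNF yV => /CV.
have C2nV : forall y, y \notin V -> (y \in C2) = false.
  by move=> y yV; apply: contraNF yV => /C2V.
have i_n : index v p < n by rewrite index_mem.
have vi : nth a p (index v p) = v by rewrite nth_index.
move: (index v p) vi i_n => i vi i_n; subst v.
have cE : forall A : {set T}, A \subset V -> complete E A -> complete E' A.
  move=> A AV cA x y xA yA xy; rewrite E'V ?(subsetP AV) //; exact: cA.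
have sV : forall A : {set T}, A \subset V -> A \subset V'.
  move=> A AV; apply: (subset_trans AV); exact: subsetUl.
case: (eqVneq i 0) => [i0|i0].
  subst i.
  apply: (@deg_lemma _ V' E' (nth a p 0) C (nth a p 1)) => //.
  - exact: E'sym.
  - exact: inV'.
  - exact: inV'.
  - exact: sV.
  - exact: Cne.
  - by rewrite nC.
  - by rewrite nthE.
  - by rewrite nC.
  - exact: cE.
  - move=> c cC'; rewrite E'nV ?CV //= ; apply/negP => /andP[_ cC2']; exact: notCC2 cC' cC2'.
  - move=> y yv; case: (yc y) => [yV|[[j jn ->]|[yV yp]]].
    + have s0 : (0 == size s) = false by lia.
      by rewrite E'nV // Vneq // eqxx s0 /= !orbF.
    + move: yv; rewrite nC // !nthE // E'nn //; lia.
    + by rewrite E'n0 // CnV // Pneq.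
case: (eqVneq i (size s)) => [iS|iS].
  subst i.
  have ps : (size s).-1 < n by lia.
  apply: (@deg_lemma _ V' E' (nth a p (size s)) C2 (nth a p (size s).-1)) => //.
  - exact: E'sym.
  - exact: inV'.
  - exact: inV'.
  - exact: sV.
  - exact: C2ne.
  - by rewrite nC2.
  - rewrite nthE //; lia.
  - by rewrite nC2.
  - exact: cE.
  - move=> c cC2'; rewrite E'nV ?C2V //.
    have -> : ((size s).-1 == size s) = false by lia.
    rewrite /= orbF; apply/negP => /andP[_ cC']; exact: notCC2 cC' cC2'.
  - move=> y yv; case: (yc y) => [yV|[[j jn ->]|[yV yp]]].
    + rewrite E'nV // Vneq // eqxx orbF.
      have -> : (size s == 0) = false by lia.
      by [].
    + move: yv; rewrite nC2 // !nthE // E'nn //; lia.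
    + by rewrite E'n0 // C2nV // Pneq.
have im : i.-1 < n by lia.
have ip : i.+1 < n by lia.
apply: (@deg_lemma _ V' E' (nth a p i) [set nth a p i.-1] (nth a p i.+1)) => //.
- exact: E'sym.
- exact: inV'.
- exact: inV'.
- by apply/subsetP => y; rewrite inE => /eqP->; exact: inV'.
- by apply/set0Pn; exists (nth a p i.-1); rewrite inE.
- rewrite inE nthE //; lia.
- rewrite nthE //; lia.
- rewrite inE nthE //; lia.
- by move=> x y; rewrite !inE => /eqP-> /eqP->; rewrite eqxx.
- move=> c; rewrite inE => /eqP->; rewrite E'nn //; lia.
- move=> y yv; case: (yc y) => [yV|[[j jn ->]|[yV yp]]].
  + by rewrite E'nV // Vneq // inE Vneq // (negbTE i0) (negbTE iS).
  + move: yv; rewrite inE !nthE // E'nn //; lia.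
  + by rewrite E'n0 // inE !Pneq.
Qed.

End Ext.

Lemma gate_inv (T : finType) (V : {set T}) (E : rel T) : gate V E ->
  [/\ symmetric E, (forall x y, E x y -> x \in V), V != set0 &
      forall v, v \in V -> good V E v].
Proof.
elim => {V E} [c uc n4 | V E C C2 a s g [Esym Esupp Vne IH] clC clC2 dis up s1 disP].
  split.
  - by move=> x y; rewrite /cycle_rel andbCA orbC.
  - by move=> x y; rewrite /cycle_rel inE => /andP[].
  - by case: c uc n4 => [|x c'] // _ _; apply/set0Pn; exists x; rewrite inE mem_head.
  - exact: cycle_good.
split.
- exact: E'sym.
- move=> x y; rewrite in_setU in_set; case: (boolP (x \in a :: s)) => xp; first by rewrite orbT.
  rewrite orbF /gate_ext /path_rel /attach_rel (negbTE xp) /=.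
  have xa : (x == a) = false by apply: contraNF xp => /eqP->; rewrite mem_head.
  have xb : (x == last a s) = false by apply: contraNF xp => /eqP->; rewrite mem_last.
  rewrite xa xb /=.
  have [/subsetP CV _ _] := clC; have [/subsetP C2V _ _] := clC2.
  case/or3P => [/Esupp //|/andP[_ /CV //]|/andP[_ /C2V //]].
- by apply/set0Pn; exists a; rewrite in_setU in_set mem_head orbT.
- move=> v; rewrite in_setU in_set => /orP[vV|vp].
  + exact: (old_good Esym Esupp Vne IH clC clC2 dis up s1 disP vV).
  + exact: (path_good Esym Esupp Vne clC clC2 dis up s1 disP vp).
Qed.

Theorem lemma5 (T : finType) (V : {set T}) (E : rel T) :
  gate V E ->
  forall v, v \in V ->
  exists C1 C2 : {set T},
    [/\ C1 != C2, clique V E C1, clique V E C2 & v \in C1 /\ v \in C2] /\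
    (forall C, clique V E C -> v \in C -> C = C1 \/ C = C2) /\
    C1 :&: C2 = [set v].
Proof. by move=> g v vV; have [_ _ _ H] := gate_inv g; exact: H. Qed.
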